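(* The subgroup $K_{(2,2)}=\{f\in F:\log_2f'(0),\log_2f'(1)\in2\mathbb{Z}\}$ of Thompson's group $F$ is generated by $x_0x_1x_4^{-1}x_0^{-3}=x_0x_1x_0^{-3}x_1^{-1}$ and $x_0x_1^2x_0^{-3}$. Moreover, the normal form of every element of $K_{(2,2)}$ has even length and contains an even number of occurrences of $x_0^{\pm1}$.
   Context: Thompson's group $F$ is the group of piecewise linear homeomorphisms of $[0,1]$ that are differentiable except at finitely many dyadic rationals with slopes in $2^{\mathbb{Z}}$, with product $(fg)(t)=g(f(t))$. Generators: $x_0(t)=2t$ on $[0,1/4]$, $t+1/4$ on $[1/4,1/2]$, and $(t+1)/2$ on $[1/2,1]$. For $n\ge1$, $x_n$ is the identity on $[0,1-2^{-n}]$ and $a_n\circ x_0\circ a_n^{-1}$ on $[1-2^{-n},1]$ with $a_n(s)=1-2^{-n}+2^{-n}s$. Then $F=\langle x_0,x_1,\dots\mid x_nx_k=x_kx_{n+1}\ (k<n)\rangle$. Normal form: every element of $F$ has a unique normal form $$x_0^{a_0}x_1^{a_1}\cdots x_n^{a_n}x_n^{-b_n}\cdots x_1^{-b_1}x_0^{-b_0},$$ with $a_i,b_i\ge0$, $a_n+b_n>0$, and such that whenever $a_i>0$ and $b_i>0$ we also have $a_{i+1}+b_{i+1}>0$. Its length is $\sum_i(a_i+b_i)$. The number of occurrences of $x_0^{\pm1}$ is $a_0+b_0$. *)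

(* Defs.v *)
(* Thompson's group F, elements given by words in the
   generators x_n^{+-1}, acting on the rationals of [0,1]. *)
From mathcomp Require Import all_boot all_order all_algebra.
Set Implicit Arguments. Unset Strict Implicit. Unset Printing Implicit Defensive.
Import Order.TTheory GRing.Theory Num.Theory.
Local Open Scope ring_scope.

Definition x0_fun (t : rat) : rat :=
  if (t < 0) || (1 < t) then t
  else if t <= 1/4 then 2 * t
  else if t <= 1/2 then t + 1/4
  else (t + 1) / 2.

Definition x0inv_fun (t : rat) : rat :=
  if (t < 0) || (1 < t) then t
  else if t <= 1/2 then t / 2
  else if t <= 3/4 then t - 1/4
  else 2 * t - 1.

Definition a_fun (n : nat) (s : rat) : rat := 1 - 2 ^- n + 2 ^- n * s.
Definition ainv_fun (n : nat) (t : rat) : rat := (t - (1 - 2 ^- n)) * 2 ^+ n.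

Definition xn_fun (n : nat) (t : rat) : rat :=
  if n is 0 then x0_fun t
  else if t <= 1 - 2 ^- n then t else a_fun n (x0_fun (ainv_fun n t)).

Definition xninv_fun (n : nat) (t : rat) : rat :=
  if n is 0 then x0inv_fun t
  else if t <= 1 - 2 ^- n then t else a_fun n (x0inv_fun (ainv_fun n t)).

(* a letter (n, false) is x_n, (n, true) is x_n^{-1} *)
Definition letter := (nat * bool)%type.
Definition word := seq letter.

Definition act_letter (l : letter) (t : rat) : rat :=
  if l.2 then xninv_fun l.1 t else xn_fun l.1 t.

(* product convention (fg)(t) = g(f(t)): the word a_1 ... a_k acts by
   applying a_1 first *)
Definition act (w : word) (t : rat) : rat := foldl (fun s l => act_letter l s) t w.

Definition same_elt (w v : word) : Prop :=
  forall t : rat, 0 <= t <= 1 -> act w t = act v t.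

(* log_2 f'(0) = k  (right derivative at 0) *)
Definition log2_slope0 (f : rat -> rat) (k : int) : Prop :=
  exists eps : rat, 0 < eps /\ forall t : rat, 0 < t < eps -> f t = 2 ^ k * t.

(* log_2 f'(1) = k  (left derivative at 1) *)
Definition log2_slope1 (f : rat -> rat) (k : int) : Prop :=
  exists eps : rat, 0 < eps /\
    forall t : rat, 1 - eps < t < 1 -> 1 - f t = 2 ^ k * (1 - t).

Definition in_K22 (w : word) : Prop :=
  (exists k : int, log2_slope0 (act w) k /\ (2 %| k)%Z) /\
  (exists k : int, log2_slope1 (act w) k /\ (2 %| k)%Z).

Definition xp (n : nat) : letter := (n, false).
Definition xm (n : nat) : letter := (n, true).

Definition g1 : word := [:: xp 0; xp 1; xm 0; xm 0; xm 0; xm 1].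
Definition g2 : word := [:: xp 0; xp 1; xp 1; xm 0; xm 0; xm 0].

Definition winv (w : word) : word := rev (map (fun l => (l.1, ~~ l.2)) w).

(* a word in the generators g1^{+-1}, g2^{+-1}: (false,_) = g1, (true,_) = g2,
   second component true = inverse *)
Definition gen_letter (c : bool * bool) : word :=
  let g := if c.1 then g2 else g1 in if c.2 then winv g else g.
Definition expand (u : seq (bool * bool)) : word := flatten (map gen_letter u).

(* normal form x_0^{a_0} ... x_n^{a_n} x_n^{-b_n} ... x_0^{-b_0},
   given by the exponent sequences a = [a_0..a_n], b = [b_0..b_n]
   (the identity has the empty normal form a = b = [::]) *)
Definition nf_word (a b : seq nat) : word :=
  flatten [seq nseq (nth 0%N a i) (xp i) | i <- iota 0 (size a)] ++
  flatten [seq nseq (nth 0%N b i) (xm i) | i <- rev (iota 0 (size b))].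

Definition is_normal_form (a b : seq nat) : Prop :=
  size a = size b /\
  ((0 < size a)%N -> (0 < nth 0 a (size a).-1 + nth 0 b (size b).-1)%N) /\
  (forall i : nat, (i < size a)%N -> (0 < nth 0 a i)%N -> (0 < nth 0 b i)%N ->
     (0 < nth 0 a i.+1 + nth 0 b i.+1)%N).

Definition nf_length (a b : seq nat) : nat := (sumn a + sumn b)%N.
Definition nf_x0_count (a b : seq nat) : nat := (nth 0 a 0 + nth 0 b 0)%N.

(* Main.v *)
Require Import Defs.
From mathcomp Require Import all_boot all_order all_algebra.
From mathcomp Require Import zify ring lra.
Set Implicit Arguments. Unset Strict Implicit. Unset Printing Implicit Defensive.
Import Order.TTheory GRing.Theory Num.Theory.
Local Open Scope ring_scope.


Definition G (f : rat -> rat) (n : nat) (t : rat) : rat :=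
  if n is 0 then f t
  else if t <= 1 - 2 ^- n then t else a_fun n (f (ainv_fun n t)).

Lemma xn_G n t : xn_fun n t = G x0_fun n t. Proof. by case: n. Qed.
Lemma xninv_G n t : xninv_fun n t = G x0inv_fun n t. Proof. by case: n. Qed.

Lemma c_pos n : 0 < 2 ^- n :> rat.
Proof. by rewrite invr_gt0 exprn_gt0. Qed.

Lemma c_S n : 2 ^- n.+1 = 2 ^- n / 2 :> rat.
Proof. by rewrite exprS invfM mulrC. Qed.

Lemma c_le1 n : 2 ^- n <= 1 :> rat.
Proof.
elim: n => [|n IH]; first by rewrite expr0 invr1.
rewrite c_S. have := c_pos n. lra.
Qed.

Lemma a1E y : a_fun 1 y = 1/2 + y/2.
Proof. rewrite /a_fun expr1. by field. Qed.
Lemma ainv1E t : ainv_fun 1 t = 2 * t - 1.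
Proof. rewrite /ainv_fun expr1. by field. Qed.

Lemma a_S n y : a_fun n.+1 y = a_fun 1 (a_fun n y).
Proof. rewrite a1E /a_fun c_S. move: (2 ^- n) => c. by field. Qed.

Lemma ainv_S n t : ainv_fun n.+1 t = ainv_fun n (ainv_fun 1 t).
Proof.
rewrite ainv1E /ainv_fun c_S exprS.
have : (2 ^+ n : rat) != 0 by rewrite expf_neq0.
move: (2 ^+ n) => d hd. by field.
Qed.

Lemma a1K t : a_fun 1 (ainv_fun 1 t) = t.
Proof. rewrite a1E ainv1E. by field. Qed.
Lemma ainv1K y : ainv_fun 1 (a_fun 1 y) = y.
Proof. rewrite a1E ainv1E. by field. Qed.

Lemma cond_S n t : (t <= 1 - 2 ^- n.+1) = (ainv_fun 1 t <= 1 - 2 ^- n).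
Proof.
rewrite ainv1E c_S. have := c_pos n => hc.
apply/idP/idP => H; lra.
Qed.

Lemma G_S f n t : G f n.+1 t = if t <= 1/2 then t else a_fun 1 (G f n (ainv_fun 1 t)).
Proof.
case: n => [|n].
  rewrite /G expr1. have -> : 1 - 2^-1 = 1/2 :> rat by by field.
  by [].
rewrite /G cond_S.
have hc := c_pos n.+1. have hc1 := c_le1 n.+1.
case: (lerP t (1/2)) => Ht.
  have -> : ainv_fun 1 t <= 1 - 2 ^- n.+1 by rewrite ainv1E; lra.
  done.
case: ifP => H2; first by rewrite a1K.
by rewrite a_S ainv_S.
Qed.


Lemma x0_cases t :
  (t < 0 /\ x0_fun t = t) \/ (1 < t /\ x0_fun t = t) \/
  (0 <= t /\ t <= 1/4 /\ x0_fun t = 2 * t) \/ (1/4 < t /\ t <= 1/2 /\ x0_fun t = t + 1/4) \/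
  (1/2 < t /\ t <= 1 /\ x0_fun t = (t + 1) / 2).
Proof.
rewrite /x0_fun; case: (ltrP t 0) => h1 /=; first by left.
case: (ltrP 1 t) => h2 /=; first by right; left.
case: (lerP t (1/4)) => h3; first by do 2 right; left.
case: (lerP t (1/2)) => h4; first by do 3 right; left.
by do 4 right.
Qed.

Lemma x0inv_cases t :
  (t < 0 /\ x0inv_fun t = t) \/ (1 < t /\ x0inv_fun t = t) \/
  (0 <= t /\ t <= 1/2 /\ x0inv_fun t = t / 2) \/ (1/2 < t /\ t <= 3/4 /\ x0inv_fun t = t - 1/4) \/
  (3/4 < t /\ t <= 1 /\ x0inv_fun t = 2 * t - 1).
Proof.
rewrite /x0inv_fun; case: (ltrP t 0) => h1 /=; first by left.
case: (ltrP 1 t) => h2 /=; first by right; left.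
case: (lerP t (1/2)) => h3; first by do 2 right; left.
case: (lerP t (3/4)) => h4; first by do 3 right; left.
by do 4 right.
Qed.

Ltac dc H := case: H => [[? ?]|[[? ?]|[[? [? ?]]|[[? [? ?]]|[? [? ?]]]]]].

Lemma x0K t : x0inv_fun (x0_fun t) = t.
Proof. dc (x0_cases t); dc (x0inv_cases (x0_fun t)); lra. Qed.
Lemma x0invK t : x0_fun (x0inv_fun t) = t.
Proof. dc (x0inv_cases t); dc (x0_cases (x0inv_fun t)); lra. Qed.

Definition P_out (f : rat -> rat) := forall t, (t < 0) \/ (1 < t) -> f t = t.
Definition P_pos (f : rat -> rat) := forall t, 0 < t -> 0 < f t.
Definition P_rng (f : rat -> rat) := forall t, 0 <= t -> t <= 1 -> 0 <= f t /\ f t <= 1.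

Lemma x0_out : P_out x0_fun. Proof. move=> t h; dc (x0_cases t); case: h; lra. Qed.
Lemma x0inv_out : P_out x0inv_fun. Proof. move=> t h; dc (x0inv_cases t); case: h; lra. Qed.
Lemma x0_pos : P_pos x0_fun. Proof. move=> t h; dc (x0_cases t); lra. Qed.
Lemma x0inv_pos : P_pos x0inv_fun. Proof. move=> t h; dc (x0inv_cases t); lra. Qed.
Lemma x0_rng : P_rng x0_fun. Proof. move=> t h h'; dc (x0_cases t); split; lra. Qed.
Lemma x0inv_rng : P_rng x0inv_fun. Proof. move=> t h h'; dc (x0inv_cases t); split; lra. Qed.


Lemma G_out f n : P_out f -> P_out (G f n).
Proof.
move=> hf; elim: n => [|n IH] t ht; first exact: hf.
rewrite G_S; case: ifPn => h1 //.
rewrite IH ?a1K //. 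
rewrite ainv1E. case: ht => ?; [left|right]; lra.
Qed.

Lemma G_pos f n : P_pos f -> P_pos (G f n).
Proof.
move=> hf; elim: n => [|n IH] t ht; first exact: hf.
rewrite G_S; case: ifPn => h1; first exact: ht.
rewrite a1E. rewrite -ltNge in h1. have h2 : 0 < ainv_fun 1 t by rewrite ainv1E; lra.
have := IH _ h2.
lra.
Qed.

Lemma G_rng f n : P_rng f -> P_rng (G f n).
Proof.
move=> hf; elim: n => [|n IH] t ht ht'; first exact: hf.
rewrite G_S; case: ifPn => h1; first by split.
rewrite -ltNge in h1.
have h2 : 0 <= ainv_fun 1 t by rewrite ainv1E; lra.
have h3 : ainv_fun 1 t <= 1 by rewrite ainv1E; lra.
have := IH _ h2 h3. rewrite a1E. lra.
Qed.

Lemma G_low f n t : t <= 1/2 -> G f n.+1 t = t.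
Proof. by move=> h; rewrite G_S h. Qed.

Lemma G_low2 f n t : t <= 3/4 -> G f n.+2 t = t.
Proof.
move=> h; rewrite G_S; case: ifPn => h1; first by [].
have h2 : ainv_fun 1 t <= 1/2 by rewrite ainv1E; lra.
by rewrite G_low ?a1K.
Qed.

Lemma G_inv f g n : (forall t, f (g t) = t) -> P_pos g -> forall t, G f n (G g n t) = t.
Proof.
move=> hfg hg; elim: n => [|n IH] t; first exact: hfg.
rewrite (G_S g); case: ifPn => h1; first by rewrite G_low.
rewrite -ltNge in h1.
have h2 : 0 < ainv_fun 1 t by rewrite ainv1E; lra.
have hp := G_pos n hg h2.
rewrite G_S. have -> : (a_fun 1 (G g n (ainv_fun 1 t)) <= 1/2) = false.
  by apply/negbTE; rewrite a1E -ltNge; lra.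
by rewrite ainv1K IH a1K.
Qed.

Lemma R0 m t : x0_fun (G x0_fun m.+1 t) = G x0_fun m.+2 (x0_fun t).
Proof.
case: (x0_cases t) => [[h1 e1]|[[h1 e1]|[[h1 [h2 e1]]|[[h1 [h2 e1]]|[h1 [h2 e1]]]]]].
- rewrite e1 !(G_out _ x0_out); [|by left|by left]. by rewrite e1.
- rewrite e1 !(G_out _ x0_out); [|by right|by right]. by rewrite e1.
- rewrite G_low; last by lra.
  rewrite G_low2; first by []. rewrite e1; lra.
- rewrite G_low; last by lra.
  rewrite G_low2; first by []. rewrite e1; lra.
- rewrite e1 (G_S _ m.+1) (G_S _ m) ifN; last by rewrite -ltNge.
  rewrite ifN; last by rewrite -ltNge; lra.
  have -> : ainv_fun 1 ((t + 1) / 2) = t by rewrite ainv1E; field.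
  rewrite (G_S _ m) ifN; last by rewrite -ltNge.
  have h3 : 0 <= ainv_fun 1 t by rewrite ainv1E; lra.
  have h4 : ainv_fun 1 t <= 1 by rewrite ainv1E; lra.
  have := G_rng m x0_rng h3 h4.
  move: (G x0_fun m (ainv_fun 1 t)) => y hy.
  rewrite !a1E. case: (x0_cases (1/2 + y/2)) => [[? ?]|[[? ?]|[[? [? ?]]|[[? [? ?]]|[? [? ?]]]]]]; lra.
Qed.

Lemma Rel k n t : (k < n)%N -> G x0_fun k (G x0_fun n t) = G x0_fun n.+1 (G x0_fun k t).
Proof.
elim: k n t => [|k IH] [|n] t hkn.
- by [].
- exact: R0.
- by [].
case: (lerP t (1/2)) => h1.
  by rewrite !(G_low _ _ h1).
have h1' : (t <= 1/2) = false by apply/negbTE; rewrite -ltNge.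
have e1 : G x0_fun n.+1 t = a_fun 1 (G x0_fun n (ainv_fun 1 t)) by rewrite G_S h1'.
have e2 : G x0_fun k.+1 t = a_fun 1 (G x0_fun k (ainv_fun 1 t)) by rewrite G_S h1'.
rewrite e1 e2.
have h2 : 0 < ainv_fun 1 t by rewrite ainv1E; lra.
have hp1 := G_pos n x0_pos h2.
have hp2 := G_pos k x0_pos h2.
move: (ainv_fun 1 t) h2 hp1 hp2 => s hs hp1 hp2.
have f1 : (a_fun 1 (G x0_fun n s) <= 1/2) = false.
  by apply/negbTE; rewrite a1E -ltNge; lra.
have f2 : (a_fun 1 (G x0_fun k s) <= 1/2) = false.
  by apply/negbTE; rewrite a1E -ltNge; lra.
rewrite (G_S _ k) f1 (G_S _ n.+1) f2.
by rewrite !ainv1K IH.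
Qed.


Definition eqw (u v : word) := forall t, act u t = act v t.

Lemma act_cons l w t : act (l :: w) t = act w (act_letter l t). Proof. by []. Qed.
Lemma act_cat u v t : act (u ++ v) t = act v (act u t). Proof. by rewrite /act foldl_cat. Qed.
Lemma act_nil t : act [::] t = t. Proof. by []. Qed.

Lemma act_letterE n b t :
  act_letter (n, b) t = if b then G x0inv_fun n t else G x0_fun n t.
Proof. by rewrite /act_letter /= xn_G xninv_G. Qed.

Lemma letterK n b t : act_letter (n, ~~ b) (act_letter (n, b) t) = t.
Proof.
rewrite !act_letterE; case: b => /=.
- exact: (G_inv _ x0invK x0inv_pos).
- exact: (G_inv _ x0K x0_pos).
Qed.

Lemma GK n t : G x0inv_fun n (G x0_fun n t) = t.
Proof. exact: (G_inv _ x0K x0_pos). Qed.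
Lemma GiK n t : G x0_fun n (G x0inv_fun n t) = t.
Proof. exact: (G_inv _ x0invK x0inv_pos). Qed.

Lemma winv_cons l w : winv (l :: w) = winv w ++ [:: (l.1, ~~ l.2)].
Proof. by rewrite /winv /= rev_cons cats1. Qed.

Lemma act_winvK w t : act (winv w) (act w t) = t.
Proof.
elim: w t => [|l w IH] t; first by [].
rewrite winv_cons act_cat act_cons IH act_cons act_nil.
by case: l => n b; rewrite letterK.
Qed.

Lemma act_winvK' w t : act w (act (winv w) t) = t.
Proof.
elim: w t => [|l w IH] t; first by [].
rewrite winv_cons act_cat act_cons act_cons act_nil.
case: l => n b /=.
by have := letterK n (~~ b) (act (winv w) t); rewrite negbK => ->.
Qed.

Lemma eqw_refl u : eqw u u. Proof. by []. Qed.
Lemma eqw_sym u v : eqw u v -> eqw v u. Proof. by move=> h t. Qed.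
Lemma eqw_trans u v w : eqw u v -> eqw v w -> eqw u w.
Proof. by move=> h1 h2 t; rewrite h1 h2. Qed.
Lemma eqw_cat u u' v v' : eqw u u' -> eqw v v' -> eqw (u ++ v) (u' ++ v').
Proof. by move=> h1 h2 t; rewrite !act_cat h1 h2. Qed.

Lemma eqw_of_nil X Y : eqw (X ++ winv Y) [::] -> eqw X Y.
Proof.
move=> h t. have := h t. rewrite act_cat act_nil => e.
by rewrite -(act_winvK' Y (act X t)) e.
Qed.

Lemma eqw_winv u v : eqw u v -> eqw (winv u) (winv v).
Proof.
move=> h t. rewrite -[in LHS](act_winvK' v t) -h act_winvK. by [].
Qed.

Definition rule (l1 l2 : letter) : option word :=
  let: (n, b1) := l1 in let: (m, b2) := l2 in
  if (n == m) && (b1 != b2) then Some [::] else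
  match b1, b2 with
  | false, false => if (m < n)%N then Some [:: (m, false); (n.+1, false)] else None
  | true, false => if (m < n)%N then Some [:: (m, false); (n.+1, true)]
                   else if (n < m)%N then Some [:: (m.+1, false); (n, true)] else None
  | true, true => if (n < m)%N then Some [:: (m.+1, true); (n, true)] else None
  | false, true => None
  end.

Fixpoint step (w : word) : option word :=
  match w with
  | l1 :: w' =>
    match w' with
    | l2 :: w'' =>
      match rule l1 l2 with
      | Some r => Some (r ++ w'')
      | None => omap (cons l1) (step w')
      end
    | [::] => None
    end
  | [::] => None
  end.

Fixpoint reduce (fuel : nat) (w : word) : word :=
  match fuel with
  | 0 => w
  | f.+1 => match step w with Some w' => reduce f w' | None => w end
  end.

Lemma rule_sound l1 l2 r : rule l1 l2 = Some r -> eqw [:: l1; l2] r.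
Proof.
case: l1 l2 => n b1 [m b2] /=.
case: ifP => [/andP [/eqP <- hb] [<-] t|_].
  rewrite !act_cons act_nil. move: hb; case: b1; case: b2 => //= _.
  - by have := letterK n true t.
  - by have := letterK n false t.
case: b1; case: b2 => //.
- case: ifP => // hn [<-] t. rewrite !act_cons !act_nil !act_letterE.
  have := Rel (G x0inv_fun n (G x0inv_fun m.+1 t)) hn.
  rewrite GiK GiK => e.
  by rewrite -[in X in X = _]e GK GK.
- case: ifP => [hm [<-] t|_].
    rewrite !act_cons !act_nil !act_letterE.
    have := Rel (G x0inv_fun n t) hm. rewrite GiK => e.
    by rewrite [in X in _ = X]e GK.
  case: ifP => // hn [<-] t. rewrite !act_cons !act_nil !act_letterE.
  have := Rel (G x0inv_fun n t) hn. rewrite GiK => e.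
  by rewrite -e GK.
- case: ifP => // hm [<-] t. rewrite !act_cons !act_nil !act_letterE.
  exact: Rel.
Qed.

Lemma step_sound w w' : step w = Some w' -> eqw w w'.
Proof.
elim: w w' => [|l1 w IH] w' //=.
case: w IH => [|l2 w''] IH //.
case E: (rule l1 l2) => [r|].
  move=> [<-] t. have := rule_sound E => h.
  rewrite act_cons act_cons act_cat.
  by rewrite -(h t) act_cons act_cons act_nil.
case E2: (step (l2 :: w'')) => [v|] //= [<-] t.
by rewrite act_cons (IH _ E2) act_cons.
Qed.

Lemma reduce_sound f w : eqw w (reduce f w).
Proof.
elim: f w => [|f IH] w /=; first exact: eqw_refl.
case E: (step w) => [v|]; last exact: eqw_refl.
exact: eqw_trans (step_sound E) (IH v).
Qed.

Lemma check_eqw X Y f : reduce f (X ++ winv Y) = [::] -> eqw X Y.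
Proof. move=> h; apply: eqw_of_nil; rewrite -h; exact: reduce_sound. Qed.

Definition rep (p : bool * bool) : word :=
  match p with
  | (false, false) => [::]
  | (true, true) => [:: xp 0]
  | (false, true) => [:: xp 1]
  | (true, false) => [:: xp 0; xp 1]
  end.

Definition upd (p : bool * bool) (l : letter) : bool * bool :=
  (addb p.1 (l.1 == 0%N), ~~ p.2).

Notation ga := (false, false).
Notation gA := (false, true).
Notation gb := (true, false).
Notation gB := (true, true).

Definition hw (p : bool * bool) (l : letter) : seq (bool * bool) :=
  match p, l with
  | (false, false), (0, false) => [::]
  | (false, false), (0, true) => [:: ga; gB; ga; gb; gA]
  | (false, false), (_, false) => [::]
  | (false, false), (_, true) => [:: ga; ga; gb; gA; gB; ga; gB; gA]
  | (true, true), (0, false) => [:: ga; gB; gA; gb; gA]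
  | (true, true), (0, true) => [::]
  | (true, true), (_, false) => [::]
  | (true, true), (_, true) => [:: ga; gB; ga; gb; gA; gB]
  | (false, true), (0, false) => [:: ga; gb; gA; gB]
  | (false, true), (0, true) => [:: ga; gb; gA; gB; ga; ga; gb; gA; gB]
  | (false, true), (_, false) => [:: ga; gb; gA; gb; ga; gB; gA; gA]
  | (false, true), (_, true) => [::]
  | (true, false), (0, false) => [:: gA; gb; ga; gb; ga; gB; gA; gB; gA]
  | (true, false), (0, true) => [:: gb; ga; gB; gA]
  | (true, false), (_, false) => [:: gb; ga; gB; gA; gb; gA]
  | (true, false), (_, true) => [::]
  end.

Definition check1 (p : bool * bool) (l : letter) : bool :=
  reduce 5000 ((rep p ++ [:: l]) ++ winv (expand (hw p l) ++ rep (upd p l))) == [::].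

Lemma check_all : all (fun p => all (check1 p) [:: xp 0; xm 0; xp 1; xm 1])
   [:: (false,false); (true,true); (false,true); (true,false)].
Proof. vm_compute. reflexivity. Qed.


Definition e0l (l : letter) : int := if l.1 == 0%N then (if l.2 then -1 else 1) else 0.
Definition e1l (l : letter) : int := if l.2 then 1 else -1.
Definition e0w (w : word) : int := foldr (fun l s => e0l l + s) 0 w.
Definition e1w (w : word) : int := foldr (fun l s => e1l l + s) 0 w.

Definition S0 (f : rat -> rat) (k : int) :=
  exists2 d : rat, 0 < d & forall t, 0 < t -> t < d -> f t = 2 ^ k * t.
Definition S1 (f : rat -> rat) (k : int) :=
  exists2 d : rat, 0 < d & forall t, 1 - d < t -> t < 1 -> 1 - f t = 2 ^ k * (1 - t).

Lemma min2 (d1 d2 : rat) : 0 < d1 -> 0 < d2 -> exists d, [/\ 0 < d, d <= d1 & d <= d2].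
Proof.
move=> h1 h2; case: (lerP d1 d2) => h.
- by exists d1; split => //; lra.
- by exists d2; split => //; lra.
Qed.

Lemma two_pos k : 0 < 2 ^ k :> rat. Proof. exact: exprz_gt0. Qed.

Lemma small_mul (c d t : rat) : 0 < c -> 0 < t -> t < d / c -> c * t < d.
Proof.
move=> hc ht h. rewrite -ltr_pdivlMl // mulrC. by [].
Qed.

Lemma expz_add (a b : int) : 2 ^ a * 2 ^ b = 2 ^ (a + b) :> rat.
Proof. by rewrite expfzDr. Qed.

Lemma S0_letter l : S0 (act_letter l) (e0l l).
Proof.
case: l => [[|n] b]; rewrite /e0l /=.
- case: b.
  + exists (1/2); first by []. move=> t h1 h2.
    rewrite act_letterE /= -invr_expz expr1z.
    case: (x0inv_cases t) => [[? ?]|[[? ?]|[[? [? e]]|[[? [? e]]|[? [? e]]]]]]; lra.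
  + exists (1/4); first by []. move=> t h1 h2.
    rewrite act_letterE /= expr1z.
    case: (x0_cases t) => [[? ?]|[[? ?]|[[? [? e]]|[[? [? e]]|[? [? e]]]]]]; lra.
- exists (1/2); first by []. move=> t h1 h2.
  rewrite expr0z mul1r act_letterE.
  have h : t <= 1/2 by lra.
  by case: b; rewrite G_low.
Qed.

Lemma S1_G f e n : S1 f e -> S1 (G f n) e.
Proof.
move=> hf; elim: n => [|n [d hd IH]]; first exact: hf.
have [d' [h1 h2 h3]] := @min2 (d/2) (1/2) ltac:(lra) ltac:(lra).
exists d' => // t ht1 ht2.
have hn : (t <= 1/2) = false by apply/negbTE; rewrite -ltNge; lra.
rewrite G_S hn a1E.
have hs1 : 1 - d < ainv_fun 1 t by rewrite ainv1E; lra.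
have hs2 : ainv_fun 1 t < 1 by rewrite ainv1E; lra.
have := IH _ hs1 hs2. rewrite ainv1E.
move: (2 ^ e) (G f n (2 * t - 1)) => c y e1. nra.
Qed.

Lemma S1_ext f g e : (forall t, f t = g t) -> S1 f e -> S1 g e.
Proof. move=> h [d hd H]; exists d => // t h1 h2; rewrite -h; exact: H. Qed.

Lemma S1_letter l : S1 (act_letter l) (e1l l).
Proof.
case: l => n b; rewrite /e1l /=.
apply: (@S1_ext (if b then G x0inv_fun n else G x0_fun n)).
  by move=> t; rewrite act_letterE; case: b.
case: b.
- apply: S1_G. exists (1/4); first by []. move=> t h1 h2.
  rewrite expr1z.
  case: (x0inv_cases t) => [[? ?]|[[? ?]|[[? [? e]]|[[? [? e]]|[? [? e]]]]]]; lra.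
- apply: S1_G. exists (1/2); first by []. move=> t h1 h2.
  rewrite -invr_expz expr1z.
  case: (x0_cases t) => [[? ?]|[[? ?]|[[? [? e]]|[[? [? e]]|[? [? e]]]]]]; lra.
Qed.

Lemma S0_word w : S0 (act w) (e0w w).
Proof.
elim: w => [|l w [d hd IH]].
  exists 1; first by []. by move=> t _ _; rewrite expr0z mul1r.
have [dl hdl Hl] := S0_letter l.
have hc := two_pos (e0l l).
have [d' [h1 h2 h3]] := @min2 dl (d / 2 ^ e0l l) hdl ltac:(by apply: divr_gt0).
exists d' => // t ht1 ht2.
rewrite act_cons Hl; last by lra. 2: by [].
rewrite IH.
- by rewrite mulrA expz_add addrC.
- by apply: mulr_gt0.
- apply: small_mul => //. lra.
Qed.

Lemma S1_word w : S1 (act w) (e1w w).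
Proof.
elim: w => [|l w [d hd IH]].
  exists 1; first by []. by move=> t _ _; rewrite expr0z mul1r.
have [dl hdl Hl] := S1_letter l.
have hc := two_pos (e1l l).
have [d' [h1 h2 h3]] := @min2 dl (d / 2 ^ e1l l) hdl ltac:(by apply: divr_gt0).
exists d' => // t ht1 ht2.
rewrite act_cons.
have e := Hl t ltac:(lra) ht2.
have hp : 0 < 2 ^ e1l l * (1 - t) by apply: mulr_gt0 => //; lra.
have hs : 2 ^ e1l l * (1 - t) < d by apply: small_mul => //; lra.
rewrite IH; last by lra. 2: by lra.
rewrite (_ : 1 - act_letter l t = 2 ^ e1l l * (1 - t)) //.
by rewrite mulrA expz_add addrC.
Qed.


Lemma exp2_inj (k k' : int) : 2 ^ k = 2 ^ k' :> rat -> k = k'.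
Proof. by apply: ieexprIz. Qed.

Lemma S0_uniq f k k' : S0 f k -> S0 f k' -> k = k'.
Proof.
move=> [d hd H] [d' hd' H'].
have [e [he h1 h2]] := min2 hd hd'.
have ha : 0 < e/2 by lra.
have hb : e/2 < d by lra.
have hc : e/2 < d' by lra.
have ha' := ha.
have := H _ ha hb. rewrite (H' _ ha hc).
move=> E; apply: exp2_inj; apply: (mulIf (lt0r_neq0 ha')); symmetry; exact: E.
Qed.

Lemma S1_uniq f k k' : S1 f k -> S1 f k' -> k = k'.
Proof.
move=> [d hd H] [d' hd' H'].
have [e [he h1 h2]] := min2 hd hd'.
have ha : 1 - e/2 < 1 by lra.
have hb : 1 - d < 1 - e/2 by lra.
have hc : 1 - d' < 1 - e/2 by lra.
have ha' : 0 < 1 - (1 - e/2) by lra.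
have := H _ hb ha. rewrite (H' _ hc ha).
move=> E; apply: exp2_inj; apply: (mulIf (lt0r_neq0 ha')); symmetry; exact: E.
Qed.

Lemma S0_transfer w v k : same_elt w v -> S0 (act w) k -> S0 (act v) k.
Proof.
move=> hs [d hd H].
have [e [he h1 h2]] := @min2 d 1 hd ltac:(lra).
exists e => // t t1 t2. rewrite -hs; last by apply/andP; split; lra.
apply: H; lra.
Qed.

Lemma S1_transfer w v k : same_elt w v -> S1 (act w) k -> S1 (act v) k.
Proof.
move=> hs [d hd H].
have [e [he h1 h2]] := @min2 d 1 hd ltac:(lra).
exists e => // t t1 t2. rewrite -hs; last by apply/andP; split; lra.
apply: H; lra.
Qed.

Lemma same_e w v : same_elt w v -> e0w w = e0w v /\ e1w w = e1w v.
Proof.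
move=> hs; split.
- exact: (S0_uniq (S0_transfer hs (S0_word w)) (S0_word v)).
- exact: (S1_uniq (S1_transfer hs (S1_word w)) (S1_word v)).
Qed.

Lemma S0_log f k : S0 f k <-> log2_slope0 f k.
Proof.
split.
- move=> [d hd H]; exists d; split => // t /andP [h1 h2]; exact: H.
- move=> [d [hd H]]; exists d => // t h1 h2; apply: H; apply/andP; split; assumption.
Qed.

Lemma S1_log f k : S1 f k <-> log2_slope1 f k.
Proof.
split.
- move=> [d hd H]; exists d; split => // t /andP [h1 h2]; exact: H.
- move=> [d [hd H]]; exists d => // t h1 h2; apply: H; apply/andP; split; assumption.
Qed.

Definition c0 (w : word) : nat := count (fun l : letter => l.1 == 0%N) w.

Lemma e0w_par w : (2 %| e0w w)%Z = ~~ odd (c0 w).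
Proof.
elim: w => [|l w IH] //=.
rewrite /c0 /= -/(c0 w) /e0l.
case: l => [[|n] []] /=; lia.
Qed.

Lemma e1w_par w : (2 %| e1w w)%Z = ~~ odd (size w).
Proof.
elim: w => [|l w IH] //=.
rewrite /e1l. case: l => n [] /=; lia.
Qed.

Lemma K22_iff w : in_K22 w <-> ~~ odd (c0 w) /\ ~~ odd (size w).
Proof.
rewrite -e0w_par -e1w_par; split.
- move=> [[k [h1 h2]] [k' [h1' h2']]].
  rewrite (S0_uniq (S0_word w) (proj2 (S0_log _ _) h1)).
  by rewrite (S1_uniq (S1_word w) (proj2 (S1_log _ _) h1')).
- move=> [h1 h2]; split.
  + exists (e0w w); split => //; apply/S0_log; exact: S0_word.
  + exists (e1w w); split => //; apply/S1_log; exact: S1_word.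
Qed.

Lemma K22_same w v : same_elt w v -> (in_K22 w <-> in_K22 v).
Proof.
move=> /same_e [h0 h1].
rewrite !K22_iff -!e0w_par -!e1w_par h0 h1. by [].
Qed.


Definition LL (l : letter) := forall p, exists u, eqw (rep p ++ [:: l]) (expand u ++ rep (upd p l)).

Lemma expand_cat u1 u2 : expand (u1 ++ u2) = expand u1 ++ expand u2.
Proof. by rewrite /expand map_cat flatten_cat. Qed.

Lemma check1_ok p l : l \in [:: xp 0; xm 0; xp 1; xm 1] -> check1 p l.
Proof.
move=> hl. move: check_all => /allP H.
have hp : p \in [:: (false,false); (true,true); (false,true); (true,false)].
  by case: p => [[] []].
by have /allP := H p hp; apply.
Qed.

Lemma LL_small n b : (n <= 1)%N -> LL (n, b).
Proof.
move=> hn p. exists (hw p (n, b)).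
apply: (@check_eqw _ _ 5000). apply/eqP. apply: check1_ok.
by case: n hn => [|[|n]] //; case: b.
Qed.

Lemma WL v : (forall l, l \in v -> LL l) ->
  forall p, exists u, eqw (rep p ++ v) (expand u ++ rep (foldl upd p v)).
Proof.
elim: v => [|l v IH] hv p.
  by exists [::]; rewrite cats0 /=; apply: eqw_refl.
have [u1 h1] := hv l (mem_head l v) p.
have [u2 h2] := IH (fun l' hl' => hv l' ltac:(by rewrite inE hl' orbT)) (upd p l).
exists (u1 ++ u2). rewrite expand_cat /=.
apply: (@eqw_trans _ ((expand u1 ++ rep (upd p l)) ++ v)).
  have -> : rep p ++ l :: v = (rep p ++ [:: l]) ++ v by rewrite -catA.
  apply: eqw_cat; [exact: h1 | exact: eqw_refl].
rewrite -catA -catA. apply: eqw_cat; first exact: eqw_refl.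
exact: h2.
Qed.

Lemma G0 f t : G f 0 t = f t. Proof. by []. Qed.

Lemma act_xp n t : act_letter (n, false) t = G x0_fun n t.
Proof. by rewrite act_letterE. Qed.
Lemma act_xm n t : act_letter (n, true) t = G x0inv_fun n t.
Proof. by rewrite act_letterE. Qed.

Lemma eqw_n2 n b : eqw [:: (n.+2, b)] [:: xm 0; (n.+1, b); xp 0].
Proof.
move=> t. rewrite !act_cons !act_nil.
case: b; rewrite !act_xp !act_xm !G0.
- have e := R0 n (G x0inv_fun n.+1 (x0inv_fun t)).
  rewrite GiK x0invK in e.
  by rewrite {1}e GK.
- have e := R0 n (x0inv_fun t). rewrite x0invK in e.
  by rewrite e.
Qed.

Lemma LL_all n b : LL (n, b).
Proof.
suff : LL (n, b) /\ LL (n.+1, b) by case.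
elim: n => [|n [_ IH]].
  by split; apply: LL_small.
split => //.
have hv : forall l, l \in [:: xm 0; (n.+1, b); xp 0] -> LL l.
  move=> l; rewrite !inE => /or3P [] /eqP ->.
  - exact: LL_small.
  - exact: IH.
  - exact: LL_small.
move=> p.
have [u hu] := WL hv p.
exists u. apply: (eqw_trans _ (eqw_trans hu _)).
- apply: eqw_cat; first exact: eqw_refl. exact: eqw_n2.
- have E : forall q, foldl upd q [:: xm 0; (n.+1, b); xp 0] = upd q (n.+2, b).
    by case=> [[] []].
  rewrite E. exact: eqw_refl.
Qed.

Lemma foldl_upd p w : foldl upd p w = (addb p.1 (odd (c0 w)), addb p.2 (odd (size w))).
Proof.
elim: w p => [|l w IH] [p1 p2] /=.
  by rewrite !addbF.
rewrite IH /upd /c0 /= oddD -/(c0 w).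
case: (l.1 == 0%N); case: p1; case: p2; case: (odd (c0 w)); case: (odd (size w)); by [].
Qed.

Lemma gen_K22 w : in_K22 w -> exists u, same_elt w (expand u).
Proof.
move=> /K22_iff [h1 h2].
have [u hu] := @WL w (fun l _ => let: (n, b) := l in LL_all n b) (false, false).
exists u => t _.
move: (hu t). rewrite foldl_upd /= (negbTE h1) (negbTE h2) /= cats0.
by [].
Qed.

Lemma expand_par u : ~~ odd (c0 (expand u)) /\ ~~ odd (size (expand u)).
Proof.
elim: u => [|c u [IH1 IH2]]; first by [].
have -> : expand (c :: u) = gen_letter c ++ expand u by [].
rewrite /c0 count_cat size_cat !oddD -/(c0 (expand u)) (negbTE IH1) (negbTE IH2).
by case: c => [[] []].
Qed.

Lemma sumn_iota_pos (f : nat -> nat) m n : (0 < m)%N -> (forall i, (0 < i)%N -> f i = 0%N) ->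
  sumn (map f (iota m n)) = 0%N.
Proof.
elim: n m => [|n IH] m hm hf //=.
by rewrite hf // IH //; apply: ltnW.
Qed.

Lemma sumn_iota0 (f : nat -> nat) n : (forall i, (0 < i)%N -> f i = 0%N) ->
  sumn (map f (iota 0 n)) = if n is 0 then 0%N else f 0%N.
Proof.
case: n => [|n] hf //=. by rewrite sumn_iota_pos // addn0.
Qed.

Lemma nf_size a b : size (nf_word a b) = (sumn a + sumn b)%N.
Proof.
rewrite /nf_word size_cat !size_flatten /shape -!map_comp.
have e : forall s : seq nat, sumn [seq (size \o (fun i => nseq (nth 0%N s i) (xp i))) i | i <- iota 0 (size s)] = sumn s.
  move=> s. rewrite (eq_map (g := nth 0%N s)); last by move=> i /=; rewrite size_nseq.
  by have := mkseq_nth 0%N s; rewrite /mkseq => ->.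
rewrite e map_rev sumn_rev.
have e' : forall s : seq nat, sumn [seq (size \o (fun i => nseq (nth 0%N s i) (xm i))) i | i <- iota 0 (size s)] = sumn s.
  move=> s. rewrite (eq_map (g := nth 0%N s)); last by move=> i /=; rewrite size_nseq.
  by have := mkseq_nth 0%N s; rewrite /mkseq => ->.
by rewrite e'.
Qed.

Lemma nf_c0 a b : c0 (nf_word a b) = (nth 0 a 0 + nth 0 b 0)%N.
Proof.
rewrite /nf_word /c0 count_cat !count_flatten -!map_comp map_rev sumn_rev.
have e : forall (s : seq nat) (bb : bool), sumn [seq (count (fun l : letter => l.1 == 0%N) \o (fun i => nseq (nth 0%N s i) (i, bb))) i | i <- iota 0 (size s)] = nth 0%N s 0.
  move=> s bb. rewrite sumn_iota0.
    by case: s => [|x s] //=; rewrite count_nseq /= mul1n.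
  move=> i hi /=. rewrite count_nseq /=. by case: i hi.
by rewrite e e.
Qed.

Local Close Scope ring_scope.

Theorem proposition3p2 :
  (forall w : word,
      in_K22 w <-> exists u : seq (bool * bool), same_elt w (expand u)) /\
  (forall w : word, in_K22 w ->
     forall a b : seq nat, is_normal_form a b -> same_elt w (nf_word a b) ->
       ~~ odd (nf_length a b) /\ ~~ odd (nf_x0_count a b)).
Proof.
split.
- move=> w; split; first exact: gen_K22.
  move=> [u hu]. apply/(K22_same hu)/K22_iff. exact: expand_par.
- move=> w hw a b _ hs.
  have /K22_iff [h1 h2] := proj1 (K22_same hs) hw.
  rewrite nf_size in h2. rewrite nf_c0 in h1.
  by split.
Qed.
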